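(* For $k,d\in\mathbb{Z}_{\ge0}$ let $M^o_{k,d}$ (resp. $M^e_{k,d}$) be the set of triples $(m,\mathbf{k},\mathbf{l})$ with $m\in\mathbb{Z}_{\ge0}$, $\mathbf{k}=(k_1,\dots,k_n)$, $\mathbf{l}=(l_1,\dots,l_n)$, $0\le n\le k$, $m+k_1+\dots+k_n=k$, $k_u\ge2$, $l_u\ge0$, $k_u-1-l_u\ge1$, such that $s:=\sum_u(k_u-1-l_u)$ satisfies $s\le d$ and $s$ odd (resp. even; $n=0$ gives $s=0$). Then $|M^o_{0,d}|=|M^o_{1,d}|=0$, $|M^e_{0,d}|=|M^e_{1,d}|=1$, and for $k\ge2$, $d\ge1$, \[|M^o_{k,d}|=|M^o_{k-1,d}|+|M^e_{k-1,d-1}|,\qquad |M^e_{k,d}|=|M^e_{k-1,d}|+|M^o_{k-1,d-1}|.\] In particular $|M^o_{0,0}|=|M^o_{1,1}|=0$, $|M^e_{0,0}|=|M^e_{1,1}|=1$, and $|M^o_{k,k}|=|M^e_{k,k}|=2^{k-2}$ for $k\ge2$.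
   Context: In the paper each triple $(m,\mathbf{k},\mathbf{l})$ represents the number $\sigma^m\mathrm{Ls}_{\mathbf{k}}^{\mathbf{l}}(\sigma)$, where $\mathrm{Ls}_{\mathbf{k}}^{\mathbf{l}}(\sigma)=(-1)^n\int_0^{\sigma}\int_0^{\theta_n}\cdots\int_0^{\theta_2}\prod_u\theta_u^{l_u}(\log|2\sin(\theta_u/2)|)^{k_u-1-l_u}\,d\theta_1\cdots d\theta_n$ for a fixed real $\sigma$. *)

(* Defs.v *)
From mathcomp Require Import all_boot.
Set Implicit Arguments. Unset Strict Implicit. Unset Printing Implicit Defensive.

Definition triple := (nat * seq nat * seq nat)%type.

Definition sval (ks ls : seq nat) : nat :=
  sumn [seq p.1 - 1 - p.2 | p <- zip ks ls].

Definition inM (par : bool) (k d : nat) (t : triple) : Prop :=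
  let: (m, ks, ls) := t in
  [/\ size ks = size ls, size ks <= k, m + sumn ks = k,
      all2 (fun ku lu => (2 <= ku) && (1 <= ku - 1 - lu)) ks ls &
      (sval ks ls <= d /\ odd (sval ks ls) = par)].

Definition Mo (k d : nat) : triple -> Prop := inM true k d.
Definition Me (k d : nat) : triple -> Prop := inM false k d.

Definition is_card (T : eqType) (P : T -> Prop) (N : nat) : Prop :=
  exists s : seq T, [/\ uniq s, forall x, x \in s <-> P x & size s = N].

(* Main.v *)
Require Import Defs.
From mathcomp Require Import all_boot.
From mathcomp Require Import zify.

Notation rr := (fun ku lu : nat => (2 <= ku) && (1 <= ku - 1 - lu)).

Definition V (k : nat) (t : triple) : bool :=
  let: (m, ks, ls) := t in (m + sumn ks == k) && all2 rr ks ls.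

Definition psi0 (t : triple) : triple := let: (m, ks, ls) := t in (m.+1, ks, ls).
Definition psi1 (t : triple) : triple := let: (m, ks, ls) := t in
  if m is m'.+1 then (0, m.+1 :: ks, m' :: ls)
  else match ks, ls with k1 :: ks', l1 :: ls' => (0, k1.+1 :: ks', l1 :: ls') | _, _ => t end.
Definition phi (t : triple) : triple := let: (m, ks, ls) := t in
  if m is m'.+1 then (m', ks, ls) else match ks, ls with
  | k1 :: ks', l1 :: ls' =>
      if 2 <= k1 - 1 - l1 then (0, k1.-1 :: ks', l1 :: ls') else (k1.-1, ks', ls')
  | _, _ => t end.

Fixpoint E (k : nat) : seq triple := match k with
  | 0 => [:: (0, [::], [::])]
  | 1 => [:: (1, [::], [::])]
  | S ((S _) as k') => map psi0 (E k') ++ map psi1 (E k')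
  end.

Lemma Ess k : E k.+2 = map psi0 (E k.+1) ++ map psi1 (E k.+1).
Proof. by []. Qed.

Lemma all2_sz ks ls : all2 rr ks ls -> (size ks).*2 <= sumn ks /\ size ks = size ls.
Proof.
elim: ks ls => [|k ks IH] [|l ls] //=.
move=> /andP [/andP [h1 h2] /IH [H1 H2]]; split; [lia | by rewrite H2].
Qed.

Lemma E_small k x : k <= 1 -> V k x -> x = (k, [::], [::]).
Proof.
case: x => [[m ks] ls] /= hk /andP [/eqP hs ha].
have [h1 h2] := @all2_sz ks ls ha.
have : size ks = 0 by lia.
move=> /size0nil e; subst ks; move: h2 => /= /esym /size0nil ->; move: hs; by rewrite /= addn0 => ->.
Qed.

Lemma phi_psi0 t : phi (psi0 t) = t.
Proof. by case: t => [[m ks] ls]. Qed.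

Lemma phi_psi1 k t : V k.+1 t -> phi (psi1 t) = t.
Proof.
case: t => [[[|m] ks] ls] /=.
  case: ks => [|k1 ks] /=; first by [].
  case: ls => [|l1 ls] //= /andP [_ /andP [/andP [_ h] _]].
  have -> : 2 <= k1.+1 - 1 - l1 by lia. by [].
move=> _; have -> : (2 <= m.+2 - 1 - m) = false by lia. by [].
Qed.

Lemma V_psi0 k t : V k t -> V k.+1 (psi0 t).
Proof. case: t => [[m ks] ls] /= /andP [/eqP h ->]; rewrite andbT; apply/eqP; lia. Qed.

Ltac fin := repeat (apply/andP; split); try apply/eqP; lia.

Lemma V_psi1 k t : V k.+1 t -> V k.+2 (psi1 t).
Proof.
case: t => [[[|m] ks] ls] /=.
  case: ks => [|k1 ks] /=; first by [].
  case: ls => [|l1 ls] /=; first by rewrite !andbF.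
  move=> /andP [/eqP h /andP [/andP [h1 h2] ->]]; rewrite ?andbT; fin.
move=> /andP [/eqP h ->]; rewrite ?andbT; fin.
Qed.

Lemma E_spec k x : (x \in E k) = V k x.
Proof.
elim: k x => [|k IH] x.
  rewrite inE; apply/eqP/idP => [->|]; first by [].
  by move/(@E_small 0 x isT).
case: k IH => [|k] IH.
  rewrite inE; apply/eqP/idP => [->|]; first by [].
  by move/(@E_small 1 x isT).
rewrite Ess mem_cat; apply/orP/idP.
  case=> /mapP [y]; rewrite IH => hy ->; [exact: V_psi0 | exact: V_psi1].
case: x => [[[|m] ks] ls] /=.
  case: ks => [|k1 ks] /=; first by [].
  case: ls => [|l1 ls] /=; first by rewrite !andbF.
  move=> /andP [/eqP h /andP [/andP [h1 h2] ha]].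
  right; apply/mapP.
  case: (boolP (2 <= k1 - 1 - l1)) => hc.
    exists (0, k1.-1 :: ks, l1 :: ls); last by rewrite /= prednK //; lia.
    by rewrite IH /= ha andbT; apply/andP; split; [apply/eqP; lia| apply/andP; split; lia].
  exists (k1.-1, ks, ls).
    by rewrite IH /= ha andbT; apply/eqP; lia.
  have e : k1.-1 = (k1 - 2).+1 by lia.
  rewrite /= e; congr (_, _ :: _, _ :: _); lia.
move=> /andP [/eqP h ha]; left; apply/mapP; exists (m, ks, ls) => //.
by rewrite IH /= ha andbT; apply/eqP; lia.
Qed.

Lemma E_uniq k : uniq (E k).
Proof.
elim: k => [|k IH] //; case: k IH => [|k] IH //.
rewrite Ess cat_uniq; apply/and3P; split.
- by rewrite map_inj_uniq //; apply: (can_inj phi_psi0).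
- apply/hasPn => x /mapP [y _ ->]; apply/mapP => [[z _]].
  case: y z => [[[|m] ks] ls] [[m' ks'] ls'] //=.
  by case: ks ls => [|? ?] [|? ?].
- rewrite map_inj_in_uniq //; apply: (can_in_inj (g := phi)) => y.
  rewrite E_spec; exact: phi_psi1.
Qed.

Definition sv (t : triple) := Defs.sval (snd (fst t)) (snd t).
Definition Pd (d : nat) (par : bool) (t : triple) : bool :=
  (sv t <= d) && (odd (sv t) == par).

Lemma sv_psi1 k t : V k.+1 t -> sv (psi1 t) = (sv t).+1.
Proof.
case: t => [[[|m] ks] ls] /=.
  case: ks => [|k1 ks] /=; first by [].
  case: ls => [|l1 ls] /=; first by rewrite !andbF.
  move=> /andP [_ /andP [/andP [h1 h2] _]].
  rewrite /sv /Defs.sval /=; lia.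
move=> _; rewrite /sv /Defs.sval /=; lia.
Qed.

Definition cnt d par k := count (Pd d par) (E k).

Lemma cnt_rec d par k : cnt d.+1 par k.+2 = cnt d.+1 par k.+1 + cnt d (~~ par) k.+1.
Proof.
rewrite /cnt Ess count_cat !count_map; congr (_ + _); first by apply: eq_count => -[[m ks] ls].
apply: eq_in_count => y; rewrite E_spec => hy /=.
rewrite /Pd (@sv_psi1 k y hy) ltnS /= ; congr (_ && _).
by case: (odd (sv y)); case: par.
Qed.

Lemma cnt_base d par k : k <= 1 -> cnt d par k = ~~ par.
Proof. by case: k => [|[|]] //= _; rewrite /cnt /= /Pd /sv /Defs.sval /=; case: par. Qed.

Lemma inM_Pd par k d t : inM par k d t <-> (Pd d par t && V k t).
Proof.
case: t => [[m ks] ls]; rewrite /inM /Pd /V /sv /=; split.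
  case=> _ _ -> -> [-> /eqP ->]; by rewrite eqxx.
move=> /andP [/andP [h1 /eqP h2] /andP [/eqP h3 ha]].
have [s1 s2] := @all2_sz ks ls ha; split => //; lia.
Qed.

Lemma cnt_card par k d : is_card (inM par k d) (cnt d par k).
Proof.
exists (filter (Pd d par) (E k)); split.
- exact: filter_uniq (E_uniq k).
- by move=> x; rewrite mem_filter E_spec inM_Pd.
- by rewrite size_filter.
Qed.

Lemma cnt_big k d : 2 <= k -> k.-1 <= d -> cnt d true k = 2 ^ (k - 2) /\ cnt d false k = 2 ^ (k - 2).
Proof.
elim: k d => [|k IH] d //; case: k IH => [|k] IH //.
case: d => [|d] /=; first by case: k {IH}.
move=> _ hd; rewrite !cnt_rec.
case: k IH hd => [|k] IH hd.
  by rewrite !cnt_base.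
have [a b] := IH d.+1 isT (ltnW hd).
have [c e] := IH d isT hd.
rewrite /= a b c e !subSS !subn0 expnS; split; lia.
Qed.

Theorem theorem9 :
  exists co ce : nat -> nat -> nat,
    [/\ forall k d, is_card (Mo k d) (co k d) /\ is_card (Me k d) (ce k d),
        forall d, co 0 d = 0 /\ co 1 d = 0 /\ ce 0 d = 1 /\ ce 1 d = 1,
        forall k d, 2 <= k -> 1 <= d ->
          co k d = co k.-1 d + ce k.-1 d.-1 /\ ce k d = ce k.-1 d + co k.-1 d.-1,
        [/\ co 0 0 = 0, co 1 1 = 0, ce 0 0 = 1 & ce 1 1 = 1]
      & forall k, 2 <= k -> co k k = 2 ^ (k - 2) /\ ce k k = 2 ^ (k - 2)].
Proof.
exists (fun k d => cnt d true k), (fun k d => cnt d false k); split.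
- move=> k d; split; exact: cnt_card.
- by move=> d; rewrite !cnt_base.
- move=> [|[|k]] [|d] //= _ _; by rewrite !cnt_rec.
- by rewrite !cnt_base.
- move=> k hk; apply: cnt_big => //; lia.
Qed.
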